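(* Let $p$ be a prime and let $n\in\mathcal{M}_p^{(2)}$. If $q$ is a prime with $q<p$ and $q\mid n$, then $q\in\{2,3,7,43\}$.
   Context: For positive integers $k,n$ let $S_k(n)=\sum_{i=1}^{n} i^k$. For an integer $a$, $\mathcal{M}_a$ denotes the set of positive integers $n$ such that $S_n(n)\equiv a\pmod{n}$. For a prime $p$, $\mathcal{M}_p^{(2)}=\{n\in\mathcal{M}_p : p^2\mid n,\ p^3\nmid n\}$. *)

(* Defs.v *)
From mathcomp Require Import all_boot.
Set Implicit Arguments. Unset Strict Implicit. Unset Printing Implicit Defensive.

Definition S (k n : nat) : nat := \sum_(1 <= i < n.+1) i ^ k.

Definition inM (a n : nat) : Prop := 0 < n /\ S n n = a %[mod n].

Definition inM2 (p n : nat) : Prop := inM p n /\ p ^ 2 %| n /\ ~~ (p ^ 3 %| n).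

(* Main.v *)
Require Import Defs.
From mathcomp Require Import all_boot ssralg zmodp poly finalg cyclic finfield.
Import GRing.Theory.
Local Open Scope ring_scope.

Lemma powsumF (r k : nat) : prime r -> ~~ (r.-1 %| k)%N ->
  \sum_(x : 'F_r) x ^+ k = 0.
Proof.
move=> pr nd.
set rs := [seq x <- enum 'F_r | x != 0].
have szr : size rs = r.-1.
  rewrite size_filter.
  have h := count_predC (fun x : 'F_r => x != 0) (enum 'F_r).
  have h2 : count (predC (fun x : 'F_r => x != 0)) (enum 'F_r) = 1%N.
    rewrite (@eq_count _ (predC (fun x : 'F_r => x != 0)) (pred1 0)); last first.
      by move=> x /=; rewrite negbK.
    by rewrite count_uniq_mem ?enum_uniq // mem_enum.
  have hc := card_Fp pr; rewrite cardE in hc; rewrite hc h2 addn1 in h.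
  exact: (congr1 predn h).
have r1 : (0 < r.-1)%N by have := prime_gt1 pr; case: (r) => [|[|]].
have : has (r.-1).-primitive_root rs.
  apply: has_prim_root => //; last by rewrite szr.
    apply/allP => x; rewrite mem_filter => /andP[xn0 _].
    rewrite unity_rootE; apply/eqP.
    have : x ^+ (r.-1).+1 = x.
      by rewrite prednK ?prime_gt0 // -{3}(card_Fp pr) expf_card.
    rewrite exprS => hh; apply: (mulfI xn0); by rewrite mulr1 hh.
  exact: filter_uniq (enum_uniq _).
case/hasP => w; rewrite mem_filter => /andP[wn0 _] pw.
have wk : w ^+ k != 1 by rewrite -(prim_order_dvd pw).
have : \sum_(x : 'F_r) (w * x) ^+ k = \sum_(x : 'F_r) x ^+ k.
  by rewrite [RHS](reindex_inj (mulfI wn0)).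
under eq_bigr do rewrite exprMn.
rewrite -mulr_sumr => /eqP; rewrite -subr_eq0 -{2}(mul1r (\sum__ _)) -mulrBl mulf_eq0.
by rewrite subr_eq0 (negbTE wk) => /eqP.
Qed.

Lemma Fsum_block (r e k : nat) : prime r ->
  \sum_(0 <= i < k * r) (i%:R : 'F_r) ^+ e =
  k%:R * \sum_(0 <= i < r) (i%:R : 'F_r) ^+ e.
Proof.
move=> pr; have r0 : (r%:R : 'F_r) = 0 := pcharf0 (pchar_Fp pr).
elim: k => [|k IH]; first by rewrite mul0n big_geq // mul0r.
rewrite (@big_cat_nat _ _ _ (k * r)) //=; last by rewrite leq_mul2r leqnSn orbT.
rewrite IH mulSn addnC.
have -> : \sum_(k * r <= i < k * r + r) (i%:R : 'F_r) ^+ e = \sum_(0 <= i < r) (i%:R : 'F_r) ^+ e.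
  rewrite -{1}[(k * r)%N]add0n big_addn addKn.
  by apply: eq_bigr => i _; rewrite natrD natrM r0 mulr0 addr0.
by rewrite -[in RHS]addn1 natrD mulrDl mul1r.
Qed.

Lemma Fsum_all (r e : nat) : prime r ->
  \sum_(0 <= i < r) (i%:R : 'F_r) ^+ e = \sum_(x : 'F_r) x ^+ e.
Proof.
move=> pr.
have h : forall m, m = r -> \sum_(0 <= i < m) (i%:R : 'F_r) ^+ e = \sum_(0 <= i < r) (i%:R : 'F_r) ^+ e.
  by move=> m ->.
rewrite -(h _ (Fp_cast pr)) big_mkord.
by apply: eq_bigr => i _; rewrite natr_Zp.
Qed.

Lemma S_dvd (r n : nat) : prime r -> (0 < n)%N -> (r %| n)%N ->
  ((r ^ 2 %| n)%N \/ ~~ (r.-1 %| n)%N) -> (r %| \sum_(1 <= i < n.+1) i ^ n)%N.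
Proof.
move=> pr n0 rn hh.
rewrite (dvdn_pcharf (pchar_Fp pr)) natr_sum.
under eq_bigr do rewrite natrX.
have r0 : (n%:R : 'F_r) = 0 by apply/eqP; rewrite -(dvdn_pcharf (pchar_Fp pr)).
rewrite big_nat_recr //= r0 expr0n eqn0Ngt n0 /= addr0.
have e0 : \sum_(0 <= i < n) (i%:R : 'F_r) ^+ n = \sum_(1 <= i < n) (i%:R : 'F_r) ^+ n.
  by rewrite big_ltn // expr0n eqn0Ngt n0 /= add0r.
rewrite -e0.
have := @Fsum_block r n (n %/ r) pr; rewrite divnK // => ->.
case: hh => [h2|nd].
  have : (r %| n %/ r)%N by rewrite dvdn_divRL // -expnSr.
  by rewrite (dvdn_pcharf (pchar_Fp pr)) => /eqP ->; rewrite mul0r.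
by rewrite Fsum_all // powsumF // mulr0.
Qed.

Local Close Scope ring_scope.

Lemma key {p n q : nat} : prime p -> inM p n -> prime q -> q < p -> q %| n ->
  ~~ (q ^ 2 %| n) /\ q.-1 %| n.
Proof.
move=> pp [n0 hS] pq qp qn.
have nd : ~~ (q %| \sum_(1 <= i < n.+1) i ^ n).
  apply/negP => hd.
  have : p %% q = 0.
    rewrite -(modn_dvdm p qn) -hS (modn_dvdm _ qn); exact/eqP.
  move/eqP; rewrite -/(q %| p) dvdn_prime2 // => /eqP E.
  by rewrite E ltnn in qp.
split.
  apply/negP => h; apply: (negP nd); apply: S_dvd => //; by left.
case: (boolP (q.-1 %| n)) => // h; exfalso; apply: (negP nd); apply: S_dvd => //; by right.
Qed.

Theorem mainTheorem5 (p n q : nat) :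
  prime p -> inM2 p n -> prime q -> q < p -> q %| n ->
  q \in [:: 2; 3; 7; 43].
Proof.
move=> pp [hM _].
elim: q {-2}q (leqnn q) => [|b IH] q qb pq qp qn.
  by rewrite leqn0 in qb; rewrite (eqP qb) in pq.
have [sqf dv] := key pp hM pq qp qn.
have q1 : 0 < q.-1 by have := prime_gt1 pq; case: (q) => [|[|]].
have d1806 : q.-1 %| 1806.
  apply/dvdn_partP => // s; rewrite mem_primes => /and3P[ps _ sd].
  have sq : s < q by apply: (leq_ltn_trans (dvdn_leq q1 sd)); rewrite prednK ?prime_gt0.
  have sn : s %| n := dvdn_trans sd dv.
  have sL : s \in [:: 2; 3; 7; 43].
    apply: (IH s) => //; last exact: ltn_trans sq qp.
    by rewrite -ltnS (leq_trans sq qb).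
  have sqf' : ~~ (s ^ 2 %| q.-1) by apply/negP => h; have [+ _] := key pp hM ps (ltn_trans sq qp) sn; rewrite (dvdn_trans h dv).
  rewrite p_part.
  have : logn s q.-1 <= 1.
    by rewrite leqNgt -(pfactor_dvdn 2 ps q1).
  have : s %| 1806 by move: sL; rewrite !inE => /orP[|/orP[|/orP[|]]] /eqP ->.
  case: (logn s q.-1) => [|[|k]].
  - by move=> *; rewrite expn0 dvd1n.
  - by move=> h _; rewrite expn1.
  - by [].
have hall : all (fun d => prime d.+1 ==> (d.+1 \in [:: 2; 3; 7; 43])) (divisors 1806).
  vm_compute; reflexivity.
have : q.-1 \in divisors 1806 by rewrite -dvdn_divisors.
move=> hd; have := allP hall _ hd.
rewrite (prednK (prime_gt0 pq)) => /implyP; apply; exact: pq.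
Qed.
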